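(* Let $B$ be an object of $\mathsf{SquaMS}$, $p\ge0$, $n_0,\dots,n_{p-1},n'_0,\dots,n'_{p-1}\in N$ and $(r,s),(t,u)\in\{0,1\}^2$. Then the distance in $N^p\otimes B$ between $n_0\otimes\cdots\otimes n_{p-1}\otimes S_B((r,s))$ and $n'_0\otimes\cdots\otimes n'_{p-1}\otimes S_B((t,u))$ equals $\frac{h+v}{3^p}$, where $(h,v)$ are $3^p$ times the absolute differences of the $x$- and $y$-coordinates of the plane points $\sum_{k<p}n_k/3^{k+1}+(r,s)/3^p$ and $\sum_{k<p}n'_k/3^{k+1}+(t,u)/3^p$. In particular, writing $n_k=(i_k,j_k)$, $n'_k=(k_k,l_k)$, $$d_{N^p\otimes B}\big((i_0,j_0)\otimes\cdots\otimes(i_{p-1},j_{p-1})\otimes S_B((0,0)),(k_0,l_0)\otimes\cdots\otimes(k_{p-1},l_{p-1})\otimes S_B((0,0))\big)=\Big|\sum_{m=0}^{p-1}\frac{i_m-k_m}{3^{m+1}}\Big|+\Big|\sum_{m=0}^{p-1}\frac{j_m-l_m}{3^{m+1}}\Big|.$$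
   Context: Let $M_0=\{(r,s)\in[0,1]^2: r\in\{0,1\}\text{ or } s\in\{0,1\}\}$. A square metric space is a pair $(X,S_X)$ with $X$ a metric space with all distances at most $2$ and $S_X\colon M_0\to X$ injective such that (sq1) for $i\in\{0,1\}$, $r,s\in[0,1]$: $d_X(S_X(i,r),S_X(i,s))=|s-r|$ and $d_X(S_X(r,i),S_X(s,i))=|s-r|$; (sq2) $d_X(S_X(r,s),S_X(t,u))\ge|r-t|+|s-u|$; $\mathsf{SquaMS}$ is the category of these with short $S$-preserving maps. Let $N=\{0,1,2\}^2$, also viewed as points of $\mathbb{R}^2$. For $X$ in $\mathsf{SquaMS}$, $N\otimes X=(N\times X)/\!\sim$, where $\sim$ is generated by $(m,S_X(p))\sim(n,S_X(q))$ whenever $m,n\in N$ differ by exactly $1$ in exactly one coordinate and $(m+p)/3=(n+q)/3$; $n\otimes x$ is the class of $(n,x)$; the metric is the quotient of $d((a,u),(b,v))=\frac13 d_X(u,v)$ if $a=b$, $2$ otherwise (infimum over finite chains, $\sim$-related consecutive pairs counting $0$); $S_{N\otimes X}(q)=n\otimes S_X(3q-n)$ for $n\in N$ with $q\in(n+[0,1]^2)/3$. $N^0\otimes B=B$, $N^{p+1}\otimes B=N\otimes(N^p\otimes B)$, with elements written $n_0\otimes\cdots\otimes n_{p-1}\otimes b$. *)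

(* Defs.v *)
From HB Require Import structures.
From mathcomp Require Import all_boot all_order all_algebra.
From mathcomp Require Import boolp classical_sets reals.
Set Implicit Arguments. Unset Strict Implicit. Unset Printing Implicit Defensive.
Import Order.TTheory GRing.Theory Num.Theory.
Local Open Scope ring_scope.
Local Open Scope classical_set_scope.

Section Defs.
Variable R : realType.

Definition M0 (q : R * R) : Prop :=
  0 <= q.1 <= 1 /\ 0 <= q.2 <= 1 /\
  (q.1 = 0 \/ q.1 = 1 \/ q.2 = 0 \/ q.2 = 1).

Record SquaMS := {
  sq_car :> Type;
  sq_d : sq_car -> sq_car -> R;
  sq_S : R * R -> sq_car;
  sq_d_ge0 : forall x y, 0 <= sq_d x y;
  sq_d_eq0 : forall x y, sq_d x y = 0 <-> x = y;
  sq_d_sym : forall x y, sq_d x y = sq_d y x;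
  sq_d_tri : forall x y z, sq_d x z <= sq_d x y + sq_d y z;
  sq_d_le2 : forall x y, sq_d x y <= 2;
  sq_S_inj : forall p q, M0 p -> M0 q -> sq_S p = sq_S q -> p = q;
  sq1_v : forall (i : bool) (r s : R), 0 <= r <= 1 -> 0 <= s <= 1 ->
      sq_d (sq_S ((i:nat)%:R, r)) (sq_S ((i:nat)%:R, s)) = `|s - r|;
  sq1_h : forall (i : bool) (r s : R), 0 <= r <= 1 -> 0 <= s <= 1 ->
      sq_d (sq_S (r, (i:nat)%:R)) (sq_S (s, (i:nat)%:R)) = `|s - r|;
  sq2 : forall p q, M0 p -> M0 q ->
      `|p.1 - q.1| + `|p.2 - q.2| <= sq_d (sq_S p) (sq_S q)
}.

Definition N := ('I_3 * 'I_3)%type.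
Definition nR (i : 'I_3) : R := (i : nat)%:R.

Definition adjacent (m n : N) : Prop :=
  (`|nR m.1 - nR n.1| = 1 /\ m.2 = n.2) \/ (m.1 = n.1 /\ `|nR m.2 - nR n.2| = 1).

Section Tensor.
Variable Y : Type.
Variable dY : Y -> Y -> R.
Variable SY : R * R -> Y.

Definition glue (a b : N * Y) : Prop :=
  exists p q : R * R, M0 p /\ M0 q /\ a.2 = SY p /\ b.2 = SY q /\
    adjacent a.1 b.1 /\
    (nR a.1.1 + p.1) / 3 = (nR b.1.1 + q.1) / 3 /\
    (nR a.1.2 + p.2) / 3 = (nR b.1.2 + q.2) / 3.

Definition base (a b : N * Y) : R :=
  if a.1 == b.1 then dY a.2 b.2 / 3 else 2.

Inductive tchain : N * Y -> N * Y -> R -> Prop :=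
| tch_nil x : tchain x x 0
| tch_glue x y z w : (glue x y \/ glue y x) -> tchain y z w -> tchain x z w
| tch_step x y z w : tchain y z w -> tchain x z (base x y + w).

(* quotient distance (pulled back to representatives) *)
Definition tensor_dist (a b : N * Y) : R := inf [set w | tchain a b w].

(* choice of n in N with q in (n + [0,1]^2)/3 *)
Definition sel (x : R) : 'I_3 :=
  if 3 * x < 1 then @inord 2 0 else if 3 * x < 2 then @inord 2 1 else @inord 2 2.

Definition tensor_S (q : R * R) : N * Y :=
  let n := (sel q.1, sel q.2) in (n, SY (3 * q.1 - nR n.1, 3 * q.2 - nR n.2)).
End Tensor.

Section Iter.
Variable B : SquaMS.

(* carrier (representatives) of N^p (x) B *)
Fixpoint Tn (p : nat) : Type :=
  match p with 0 => sq_car B | p'.+1 => (N * Tn p')%type end.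

Fixpoint lvl (p : nat) : (Tn p -> Tn p -> R) * (R * R -> Tn p) :=
  match p return (Tn p -> Tn p -> R) * (R * R -> Tn p) with
  | 0 => (@sq_d B, @sq_S B)
  | p'.+1 => let dS := lvl p' in (tensor_dist dS.1 dS.2, tensor_S dS.2)
  end.

Definition dist_p (p : nat) : Tn p -> Tn p -> R := (lvl p).1.

Fixpoint embed (p : nat) (ns : nat -> N) (b : sq_car B) : Tn p :=
  match p return Tn p with
  | 0 => b
  | p'.+1 => (ns 0%N, embed p' (fun k => ns k.+1) b)
  end.
End Iter.

Definition plane_pt (p : nat) (ns : nat -> N) (r s : R) : R * R :=
  (\sum_(k < p) nR (ns k).1 / 3 ^+ k.+1 + r / 3 ^+ p,
   \sum_(k < p) nR (ns k).2 / 3 ^+ k.+1 + s / 3 ^+ p).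

End Defs.

(* Main.v *)
Require Import Defs.
From HB Require Import structures.
From mathcomp Require Import all_boot all_order all_algebra.
From mathcomp Require Import boolp classical_sets reals.
From mathcomp Require Import ring lra zify.
Import Order.TTheory GRing.Theory Num.Theory.
Local Open Scope ring_scope.
Set Implicit Arguments. Unset Strict Implicit.
Local Open Scope classical_set_scope.

Section Gen.
Variable R : realType.
Variable Y : Type.
Variable dY : Y -> Y -> R.
Variable SY : R * R -> Y.
Hypothesis dY0 : forall x y, 0 <= dY x y.

Lemma base_ge0 a b : 0 <= base dY a b.
Proof. rewrite /base; case: ifP => _; [by rewrite divr_ge0 // | by []]. Qed.

Lemma chain_ge0 a b w : tchain dY SY a b w -> 0 <= w.
Proof. elim=> // x y z w' _ H; by rewrite addr_ge0 // base_ge0. Qed.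

Lemma chain_cat a b w1 : tchain dY SY a b w1 -> forall c w2,
  tchain dY SY b c w2 -> tchain dY SY a c (w1 + w2).
Proof.
elim=> [x|x y z w g _ IH|x y z w _ IH] c w2 H.
- by rewrite add0r.
- exact: (tch_glue g (IH _ _ H)).
- by rewrite -addrA; apply: tch_step; apply: IH.
Qed.

Lemma td_lb a b : has_lbound [set w | tchain dY SY a b w].
Proof. by exists 0 => w /chain_ge0. Qed.

Lemma td_le a b w : tchain dY SY a b w -> tensor_dist dY SY a b <= w.
Proof. move=> H; exact: (ge_inf (td_lb a b)). Qed.

Lemma td_ne a b : [set w | tchain dY SY a b w] !=set0.
Proof. exists (base dY a b + 0); apply: tch_step; exact: tch_nil. Qed.

Lemma td_ge a b x : (forall w, tchain dY SY a b w -> x <= w) ->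
  x <= tensor_dist dY SY a b.
Proof. move=> H; apply: lb_le_inf; [exact: td_ne | exact: H]. Qed.

Lemma td_ge0 a b : 0 <= tensor_dist dY SY a b.
Proof. apply: td_ge => w; exact: chain_ge0. Qed.

Lemma td_refl a : tensor_dist dY SY a a = 0.
Proof. apply/eqP; rewrite eq_le td_ge0 andbT; apply: td_le; exact: tch_nil. Qed.

Lemma td_tri a b c : tensor_dist dY SY a c <= tensor_dist dY SY a b + tensor_dist dY SY b c.
Proof.
rewrite -lerBlDr; apply: td_ge => w2 H2.
rewrite lerBlDr addrC -lerBlDr; apply: td_ge => w1 H1.
rewrite lerBlDr addrC; apply: td_le; exact: (chain_cat H2 H1).
Qed.

Lemma td_same a b : a.1 = b.1 -> tensor_dist dY SY a b <= dY a.2 b.2 / 3.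
Proof.
move=> e; have -> : dY a.2 b.2 / 3 = base dY a b + 0 by rewrite /base e eqxx addr0.
apply: td_le; apply: tch_step; exact: tch_nil.
Qed.

Lemma td_glue a b : glue SY a b -> tensor_dist dY SY a b <= 0.
Proof. move=> g; apply: td_le; apply: tch_glue; [left; exact g| exact: tch_nil]. Qed.
End Gen.

Section M.
Variable R : realType.

Lemma plane_rec p (ms : nat -> N) (c1 c2 : R) :
  plane_pt p.+1 ms c1 c2 =
  ((@nR R (ms 0%N).1 + (plane_pt p (fun k => ms k.+1) c1 c2).1) / 3,
   (@nR R (ms 0%N).2 + (plane_pt p (fun k => ms k.+1) c1 c2).2) / 3).
Proof.
rewrite /plane_pt /=; congr pair; rewrite big_ord_recl /= !mulrDl big_distrl /= expr1 -!addrA;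
  congr (_ + (_ + _)); [apply: eq_bigr => i _ | | apply: eq_bigr => i _ |];
  rewrite ?exprS ?invfM -?mulrA ?[_^-1 * 3^-1]mulrC //.
Qed.

Variable B : SquaMS R.
Local Notation Sp p := (lvl B p).2.
Local Notation D p := (@dist_p R B p).

Lemma DS p : D p.+1 = tensor_dist (D p) (Sp p).
Proof. by []. Qed.

Lemma D_ge0 p x y : 0 <= D p x y.
Proof. elim: p x y => [|p IH] x y; [exact: sq_d_ge0 | rewrite DS; exact: td_ge0]. Qed.

Lemma D_refl p x : D p x x = 0.
Proof. case: p x => [|p] x; [exact/sq_d_eq0 | rewrite DS; exact: td_refl (@D_ge0 p) _]. Qed.

Lemma D_tri p x y z : D p x z <= D p x y + D p y z.
Proof. case: p x y z => [|p] x y z; [exact: sq_d_tri | rewrite DS; exact: td_tri (Sp p) (@D_ge0 p) _ _ _]. Qed.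

Definition l1 (P Q : R * R) := `|P.1 - Q.1| + `|P.2 - Q.2|.

Lemma l1_tri P Q S : l1 P S <= l1 P Q + l1 Q S.
Proof.
rewrite /l1 addrACA; apply: lerD.
- by rewrite -(subrKA Q.1) ler_normD.
- by rewrite -(subrKA Q.2) ler_normD.
Qed.

Definition good p (z : Tn B p) (P : R * R) := exists ms (c : R * R),
  M0 c /\ z = embed p ms (sq_S B c) /\ P = plane_pt p ms c.1 c.2.
Arguments good : clear implicits.

Lemma in01_plane p ms (c1 c2 : R) : 0 <= c1 <= 1 -> 0 <= c2 <= 1 ->
  0 <= (plane_pt p ms c1 c2).1 <= 1 /\ 0 <= (plane_pt p ms c1 c2).2 <= 1.
Proof.
move=> h1 h2; elim: p ms => [|p IH] ms.
  by rewrite /plane_pt /= !big_ord0 !add0r !expr0 !divr1.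
rewrite plane_rec; case: (IH (fun k => ms k.+1)).
move: (plane_pt p (fun k => ms k.+1) c1 c2) => P' /= /andP[a1 a2] /andP[b1 b2].
have hn : forall i : 'I_3, 0 <= @nR R i <= 2.
  by move=> [[|[|[|i]]] hi] //=; rewrite /nR /= ?ler0n ?ler_nat.
case/andP: (hn (ms 0%N).1) => n1 n2; case/andP: (hn (ms 0%N).2) => m1 m2.
split; apply/andP; split; rewrite ?ler_pdivlMr ?ler_pdivrMr ?ltr0n // ?mul0r ?mul1r; lra.
Qed.

Lemma plane0 ms (c1 c2 : R) : plane_pt 0 ms c1 c2 = (c1, c2).
Proof. by rewrite /plane_pt !big_ord0 !add0r expr0 !divr1. Qed.

Definition pos (n : N) (P : R * R) : R * R :=
  ((@nR R n.1 + P.1) / 3, (@nR R n.2 + P.2) / 3).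

Definition goodc p (y : N * Tn B p) P := exists P', good p y.2 P' /\ P = pos y.1 P'.
Arguments goodc : clear implicits.

Lemma good_succ p (y : Tn B p.+1) P : good p.+1 y P <-> goodc p y P.
Proof.
split.
- move=> [ms [c [Mc [-> ->]]]]; exists (plane_pt p (fun k => ms k.+1) c.1 c.2); split.
    by exists (fun k => ms k.+1), c.
  by rewrite plane_rec.
- case: y => n z [P' [[ms [c [Mc [/= -> ->]]]] ->]].
  exists (fun k => if k is k'.+1 then ms k' else n), c; split => //; split => //.
  by rewrite plane_rec.
Qed.

Lemma good_uniq p z P P' : good p z P -> good p z P' -> P = P'.
Proof.
elim: p z P P' => [|p IH] z P P'.
  move=> [ms [c [Mc [/= -> ->]]]] [ms' [c' [Mc' [/= e ->]]]].
  by rewrite !plane0 (sq_S_inj Mc Mc' e).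
move=> /good_succ [Q [gQ ->]] /good_succ [Q' [gQ' ->]].
by rewrite (IH _ _ _ gQ gQ').
Qed.

Lemma nR_inord k : (k < 3)%N -> @nR R (@inord 2 k) = k%:R.
Proof. by move=> hk; rewrite /nR inordK. Qed.

Lemma sel_ok (x : R) : 0 <= x <= 1 ->
  0 <= 3 * x - nR R (sel x) <= 1 /\ (x = 0 -> 3 * x - nR R (sel x) = 0)
  /\ (x = 1 -> 3 * x - nR R (sel x) = 1).
Proof.
move=> /andP[h0 h1]; rewrite /sel.
case: ifP => [a|/negbT a]; last case: ifP => [b|/negbT b].
- rewrite nR_inord //; split; [apply/andP; split|split => e; subst x]; lra.
- rewrite -leNgt in a; rewrite nR_inord //; split; [apply/andP; split|split => e; subst x]; lra.
- rewrite -leNgt in a b; rewrite nR_inord //; split; [apply/andP; split|split => e; subst x]; lra.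
Qed.

Definition selq (q : R * R) : N := (sel q.1, sel q.2).
Definition resq (q : R * R) : R * R :=
  (3 * q.1 - nR R (selq q).1, 3 * q.2 - nR R (selq q).2).

Lemma M0_res q : M0 q -> M0 (resq q).
Proof.
move=> [h1 [h2 h3]].
case: (sel_ok h1) => a1 [a2 a3]; case: (sel_ok h2) => b1 [b2 b3].
rewrite /M0 /resq /=; split => //; split => //.
case: h3 => [e|[e|[e|e]]]; [left; exact: a2 e | right; left; exact: a3 e
  | right; right; left; exact: b2 e | right; right; right; exact: b3 e].
Qed.

Lemma SpS p q : Sp p.+1 q = (selq q, Sp p (resq q)).
Proof. by []. Qed.

Lemma pos_res q : pos (selq q) (resq q) = q.
Proof. case: q => a b; rewrite /pos /resq /=; by congr pair; rewrite addrC subrK mulrC mulKf // pnatr_eq0.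
Qed.

Lemma good_S p q : M0 q -> good p (Sp p q) q.
Proof.
elim: p q => [|p IH] q Mq.
  by exists (fun _ => (ord0, ord0)), q; rewrite plane0; case: q Mq.
apply/good_succ; rewrite SpS; exists (resq q); split; last by rewrite pos_res.
exact: IH (M0_res Mq).
Qed.

Lemma good_in01 p z P : good p z P -> (0 <= P.1 <= 1) /\ (0 <= P.2 <= 1).
Proof. by move=> [ms [c [[h1 [h2 _]] [_ ->]]]]; apply: in01_plane. Qed.

Lemma goodc_in01 p z P : goodc p z P -> (0 <= P.1 <= 1) /\ (0 <= P.2 <= 1).
Proof.
move=> [P' [/good_in01 [/andP[a1 a2] /andP[b1 b2]] ->]]; rewrite /pos /=.
have hn : forall i : 'I_3, 0 <= @nR R i <= 2.
  by move=> [[|[|[|i]]] hi] //=; rewrite /nR /= ?ler0n ?ler_nat.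
case/andP: (hn z.1.1) => n1 n2; case/andP: (hn z.1.2) => m1 m2.
split; apply/andP; split; rewrite ?ler_pdivlMr ?ler_pdivrMr ?ltr0n // ?mul0r ?mul1r; lra.
Qed.

Lemma l1_le2 P Q : (0 <= P.1 <= 1) /\ (0 <= P.2 <= 1) ->
  (0 <= Q.1 <= 1) /\ (0 <= Q.2 <= 1) -> l1 P Q <= 2.
Proof.
move=> [/andP[a1 a2] /andP[b1 b2]] [/andP[c1 c2] /andP[d1 d2]]; rewrite /l1.
have h1 : `|P.1 - Q.1| <= 1 by rewrite ler_norml; apply/andP; split; lra.
have h2 : `|P.2 - Q.2| <= 1 by rewrite ler_norml; apply/andP; split; lra.
lra.
Qed.

Lemma l1_pos n P Q : l1 (pos n P) (pos n Q) = l1 P Q / 3.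
Proof.
rewrite /l1 /pos /= -!mulrBl !normrM mulrDl; congr (_ + _); rewrite opprD addrACA subrr add0r;
  by rewrite [`|3^-1|]ger0_norm // invr_ge0 ler0n.
Qed.

Definition LBp p := forall x y Px Py, good p x Px -> good p y Py ->
  l1 Px Py <= D p x y.

Lemma LB0 : LBp 0.
Proof.
move=> x y Px Py [ms [c [Mc [/= -> ->]]]] [ms' [c' [Mc' [/= -> ->]]]].
rewrite !plane0 /l1 /dist_p /=. exact: (sq2 B Mc Mc').
Qed.

Lemma goodc_same p : LBp p -> forall x y Px Py, goodc p x Px -> goodc p y Py ->
  x.1 = y.1 -> l1 Px Py <= D p x.2 y.2 / 3.
Proof.
move=> L x y Px Py [P' [g ->]] [Q' [g' ->]] e; rewrite e l1_pos.
rewrite ler_pM2r ?invr_gt0 ?ltr0n //; exact: L.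
Qed.

Lemma glue_good p a b : glue (Sp p) a b -> exists G, goodc p a G /\ goodc p b G.
Proof.
move=> [p0 [q0 [M1 [M2 [ea [eb [_ [e1 e2]]]]]]]].
exists (pos a.1 p0); split; first by exists p0; rewrite ea; split => //; exact: good_S.
exists q0; rewrite eb; split; first exact: good_S.
by rewrite /pos e1 e2.
Qed.

Lemma chainLB p : LBp p -> forall y z w, tchain (D p) (Sp p) y z w ->
  forall Pz, goodc p z Pz -> forall x Px, goodc p x Px -> x.1 = y.1 ->
  l1 Px Pz <= D p x.2 y.2 / 3 + w.
Proof.
move=> L y z w; elim => [y0 | y0 y' z0 w0 g ch IHc | y0 y' z0 w0 ch IHc] Pz gz x Px gx e.
- by rewrite addr0; exact: goodc_same gx gz e.
- have [G [gy gy']] : exists G, goodc p y0 G /\ goodc p y' G.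
    case: g => g; first exact: glue_good.
    by case: (glue_good g) => G [a b]; exists G.
  have h1 := IHc Pz gz y' G gy' erefl; rewrite D_refl mul0r add0r in h1.
  have h2 := goodc_same L gx gy e.
  apply: le_trans (l1_tri Px G Pz) _; exact: lerD.
- rewrite /base; case: eqP => e2.
  + have h1 := IHc Pz gz x Px gx (etrans e e2).
    apply: le_trans h1 _; rewrite addrA lerD2r -mulrDl ler_pM2r ?invr_gt0 ?ltr0n //.
    exact: D_tri.
  + have h1 := l1_le2 (goodc_in01 gx) (goodc_in01 gz).
    have h2 : 0 <= D p x.2 y0.2 / 3 by rewrite divr_ge0 // D_ge0.
    have h3 := chain_ge0 (@D_ge0 p) ch.
    lra.
Qed.

Lemma LBS p : LBp p -> LBp p.+1.
Proof.
move=> L x y Px Py /good_succ gx /good_succ gy; rewrite DS.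
apply: td_ge => w ch; have := chainLB L ch gy gx erefl.
by rewrite D_refl mul0r add0r.
Qed.

Lemma LB p : LBp p.
Proof. elim: p => [|p IH]; [exact: LB0 | exact: LBS]. Qed.

Definition corner p (z : Tn B p) (P : R * R) := exists ms (r s : bool),
  z = embed p ms (sq_S B ((r:nat)%:R, (s:nat)%:R)) /\ P = plane_pt p ms (r:nat)%:R (s:nat)%:R.
Arguments corner : clear implicits.
Definition cornerc p (y : N * Tn B p) P := exists P', corner p y.2 P' /\ P = pos y.1 P'.
Arguments cornerc : clear implicits.

Lemma M0_corner (r s : bool) : M0 ((r:nat)%:R : R, (s:nat)%:R : R).
Proof. by case: r; case: s; rewrite /M0 /= ?ler01 ?lexx; do !split => //; auto. Qed.

Lemma corner_good p z P : corner p z P -> good p z P.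
Proof. move=> [ms [r [s [-> ->]]]]; exists ms, ((r:nat)%:R, (s:nat)%:R); split => //; exact: M0_corner. Qed.

Lemma corner_succ p (y : Tn B p.+1) P : corner p.+1 y P <-> cornerc p y P.
Proof.
split.
- move=> [ms [r [s [-> ->]]]]; exists (plane_pt p (fun k => ms k.+1) (r:nat)%:R (s:nat)%:R); split.
    by exists (fun k => ms k.+1), r, s.
  by rewrite plane_rec.
- case: y => n z [P' [[ms [r [s [/= -> ->]]]] ->]].
  exists (fun k => if k is k'.+1 then ms k' else n), r, s; split => //.
  by rewrite plane_rec.
Qed.

Definition grid p (x : R) := exists k : nat, x * 3 ^+ p = k%:R.

Lemma grid_plane p z P : corner p z P -> grid p P.1 /\ grid p P.2.
Proof.
move=> [ms [r [s [_ ->]]]]; clear z; elim: p ms => [|p IH] ms.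
  by rewrite plane0 /=; split; [exists r | exists s]; rewrite expr0 mulr1.
rewrite plane_rec; case: (IH (fun k => ms k.+1)).
move: (plane_pt p (fun k => ms k.+1) _ _) => P' [k1 h1] [k2 h2] /=.
have e : forall (a b : R), (a + b) / 3 * 3 ^+ p.+1 = a * 3 ^+ p + b * 3 ^+ p.
  by move=> a b; rewrite exprS mulrA divfK ?pnatr_eq0 // mulrDl.
split; [exists ((ms 0%N).1 * 3 ^ p + k1)%N | exists ((ms 0%N).2 * 3 ^ p + k2)%N];
  rewrite e ?h1 ?h2 /nR;
  by rewrite natrD natrM natrX.
Qed.

Lemma grid0 (x : R) : 0 <= x <= 1 -> grid 0 x -> exists b : bool, x = (b:nat)%:R.
Proof.
move=> /andP[h0 h1] [k]; rewrite expr0 mulr1 => e; subst x.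
rewrite lern1 in h1; case: k h0 h1 => [|[|k]] //= _ _; [by exists false | by exists true].
Qed.

Lemma grid_res p (x : R) (i : 'I_3) : 0 <= 3 * x - nR R i -> grid p.+1 x ->
  grid p (3 * x - nR R i).
Proof.
move=> h [k e].
have e2 : (3 * x - nR R i) * 3 ^+ p = k%:R - (i * 3 ^ p)%N%:R.
  by rewrite mulrBl [3 * x * _]mulrAC -exprS [3 ^+ p.+1 * x]mulrC e natrM natrX.
have le : (i * 3 ^ p <= k)%N.
  by rewrite -(ler_nat R) -subr_ge0 -e2 mulr_ge0 // exprn_ge0 // ler0n.
by exists (k - i * 3 ^ p)%N; rewrite e2 natrB.
Qed.

Lemma corner_S p q : M0 q -> grid p q.1 -> grid p q.2 -> corner p (Sp p q) q.
Proof.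
elim: p q => [|p IH] q Mq g1 g2.
  case: (Mq) => [h1 [h2 _]].
  case: (grid0 h1 g1) => r e1; case: (grid0 h2 g2) => s e2.
  exists (fun _ => (ord0, ord0)), r, s; rewrite plane0 -e1 -e2; split => //.
  by case: q {Mq g1 g2 h1 h2 e1 e2}.
  by case: q {Mq g1 g2 h1 h2 e1 e2}.
apply/corner_succ; rewrite SpS; exists (resq q); split; last by rewrite pos_res.
case: (M0_res Mq) => [/andP[a _] [/andP[b _] _]].
apply: IH; [exact: M0_res | exact: grid_res | exact: grid_res].
Qed.

Definition UBp p := forall x y Px Py, corner p x Px -> corner p y Py ->
  D p x y <= l1 Px Py.

Lemma UB0 : UBp 0.
Proof.
move=> x y Px Py [ms [r [s [/= -> ->]]]] [ms' [t [u [/= -> ->]]]].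
rewrite !plane0 /l1 /dist_p /=.
have hb : forall b : bool, 0 <= ((b:nat)%:R : R) <= 1 by case; rewrite /= ?lexx ?ler01.
apply: (le_trans (sq_d_tri _ (sq_S B ((t:nat)%:R, (s:nat)%:R)) _)).
rewrite (sq1_h B s (hb r) (hb t)) (sq1_v B t (hb s) (hb u)).
by rewrite distrC [`|(s:nat)%:R - _|]distrC.
Qed.

Definition between (x g y : R) := (x <= g <= y) \/ (y <= g <= x).

Lemma norm_between x g y : between x g y -> `|x - g| + `|g - y| = `|x - y|.
Proof.
case=> /andP[h1 h2].
- rewrite (ler0_norm (_ : x - g <= 0)) ?(ler0_norm (_ : g - y <= 0)) ?(ler0_norm (_ : x - y <= 0)); lra.
- rewrite (ger0_norm (_ : 0 <= x - g)) ?(ger0_norm (_ : 0 <= g - y)) ?(ger0_norm (_ : 0 <= x - y)); lra.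
Qed.

Lemma l1_between P G Q : between P.1 G.1 Q.1 -> between P.2 G.2 Q.2 ->
  l1 P G + l1 G Q = l1 P Q.
Proof.
move=> h1 h2; rewrite /l1 addrACA norm_between // norm_between //.
Qed.

Lemma between_l x y : between x x y.
Proof. case: (lerP x y) => h; [left | right]; rewrite lexx ?andbT //; exact: ltW. Qed.

Definition cd (n m : N) : nat := (n.1 - m.1) + (m.1 - n.1) + (n.2 - m.2) + (m.2 - n.2).

Lemma bscale x g y : between x g y -> between (x / 3) (g / 3) (y / 3).
Proof. by case=> /andP[h1 h2]; [left|right]; apply/andP; split; lra. Qed.

Section UBS.
Variable p : nat.
Hypothesis U : UBp p.
Local Notation D1 := (tensor_dist (D p) (Sp p)).

Lemma same_UB a b Pa Pb : cornerc p a Pa -> cornerc p b Pb -> a.1 = b.1 ->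
  D1 a b <= l1 Pa Pb.
Proof.
move=> [P' [g ->]] [Q' [g' ->]] e.
apply: le_trans (td_same (Sp p) (@D_ge0 p) e) _.
rewrite e l1_pos ler_pM2r ?invr_gt0 ?ltr0n //; exact: U.
Qed.

Lemma cross a b Pa n nb (e f : R * R) : cornerc p a Pa -> a.1 = n -> adjacent R n nb ->
  M0 e -> M0 f -> grid p e.1 -> grid p e.2 ->
  nR R n.1 + e.1 = nR R nb.1 + f.1 -> nR R n.2 + e.2 = nR R nb.2 + f.2 ->
  D1 a b <= l1 Pa (pos n e) + D1 (nb, Sp p f) b.
Proof.
move=> ga an adj Me Mf g1 g2 q1 q2.
apply: le_trans (td_tri (Sp p) (@D_ge0 p) a (n, Sp p e) b) _; apply: lerD.
  apply: same_UB => //; exists e; split => //; exact: corner_S.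
apply: le_trans (td_tri (Sp p) (@D_ge0 p) _ (nb, Sp p f) b) _.
rewrite -[X in _ <= X]add0r lerD2r; apply: (td_glue (@D_ge0 p)).
by exists e, f; do !split => //=; rewrite ?q1 ?q2.
Qed.

Lemma finish k a b P'a P'b nb (e f : R * R) :
  (forall a b Pa Pb, (cd a.1 b.1 <= k)%N -> cornerc p a Pa -> cornerc p b Pb ->
      D1 a b <= l1 Pa Pb) ->
  corner p a.2 P'a -> corner p b.2 P'b -> adjacent R a.1 nb ->
  M0 e -> M0 f -> grid p e.1 -> grid p e.2 -> grid p f.1 -> grid p f.2 ->
  nR R a.1.1 + e.1 = nR R nb.1 + f.1 -> nR R a.1.2 + e.2 = nR R nb.2 + f.2 ->
  (cd nb b.1 <= k)%N ->
  between (nR R a.1.1 + P'a.1) (nR R a.1.1 + e.1) (nR R b.1.1 + P'b.1) ->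
  between (nR R a.1.2 + P'a.2) (nR R a.1.2 + e.2) (nR R b.1.2 + P'b.2) ->
  D1 a b <= l1 (pos a.1 P'a) (pos b.1 P'b).
Proof.
move=> IH ca cb adj Me Mf ge1 ge2 gf1 gf2 q1 q2 hk /bscale b1 /bscale b2.
apply: le_trans (cross b (_ : cornerc p a (pos a.1 P'a)) erefl adj Me Mf ge1 ge2 q1 q2) _.
  by exists P'a.
have -> : pos a.1 e = pos nb f by rewrite /pos q1 q2.
apply: le_trans (lerD (lexx _) (IH (nb, Sp p f) b (pos nb f) (pos b.1 P'b) hk _ _)) _.
- by exists f; split => //; exact: corner_S.
- by exists P'b.
rewrite l1_between //; by rewrite -(_ : pos a.1 e = pos nb f) // /pos q1 q2.
Qed.

Lemma nR_le2 (i : 'I_3) : nR R i = (i:nat)%:R.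
Proof. by []. Qed.

Lemma UB_cell k : forall a b Pa Pb, (cd a.1 b.1 <= k)%N -> cornerc p a Pa ->
  cornerc p b Pb -> D1 a b <= l1 Pa Pb.
Proof.
elim: k => [|k IH] a b Pa Pb hk ga gb.
  apply: same_UB => //; move: hk; rewrite /cd.
  case: a.1 b.1 => [[i1 hi1] [j1 hj1]] [[i2 hi2] [j2 hj2]] /= hk.
  have e1 : i1 = i2 by lia.
  have e2 : j1 = j2 by lia.
  subst; congr pair; exact: val_inj.
case: (eqVneq a.1 b.1) => [e|ne]; first exact: same_UB.
case: ga gb => [P'a [ca ->]] [P'b [cb ->]].
case: (good_in01 (corner_good ca)) => /andP[a1 a2] /andP[a3 a4].
case: (good_in01 (corner_good cb)) => /andP[b1 b2] /andP[b3 b4].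
case: (grid_plane ca) => ga1 ga2.
have g0 : grid p (0 : R) by exists 0%N; rewrite mul0r.
have g1 : grid p (1 : R) by exists (3 ^ p)%N; rewrite mul1r natrX.
have M1 : forall y : R, 0 <= y <= 1 -> M0 (1, y).
  by move=> y hy; rewrite /M0 /= ler01 lexx; split => //; split => //; right; left.
have M2 : forall y : R, 0 <= y <= 1 -> M0 (0, y).
  by move=> y hy; rewrite /M0 /= ler01 lexx; split => //; split => //; left.
have M3 : forall y : R, 0 <= y <= 1 -> M0 (y, 1).
  by move=> y hy; rewrite /M0 /= ler01 lexx; split => //; split => //; right; right; right.
have M4 : forall y : R, 0 <= y <= 1 -> M0 (y, 0).
  by move=> y hy; rewrite /M0 /= ler01 lexx; split => //; split => //; right; right; left.
have ha : 0 <= P'a.1 <= 1 by rewrite a1 a2.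
have hb : 0 <= P'a.2 <= 1 by rewrite a3 a4.
move: hk ne ca cb.
case: a => [[[i1 hi1] [j1 hj1]] za]; case: b => [[[i2 hi2] [j2 hj2]] zb] /=.
rewrite /cd /= => hk ne ca cb.
have nat1 : forall m : nat, (m.+1%:R : R) = m%:R + 1 by move=> m; rewrite natr1.
case: (ltngtP i1 i2) => h1.
- have hr : (i1.+1 < 3)%N by lia.
  have hle : (i1.+1%:R <= i2%:R :> R) by rewrite ler_nat.
  apply: (finish (a := (Ordinal hi1, Ordinal hj1, za)) (b := (Ordinal hi2, Ordinal hj2, zb)) (nb := (Ordinal hr, Ordinal hj1)) (e := (1, P'a.2)) (f := (0, P'a.2))
    IH ca cb); rewrite /adjacent /nR /cd /pos /= ?nat1 ?addr0 //.
  + by left; split => //; rewrite opprD addrA subrr add0r normrN normr1.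
  + exact: M1.
  + exact: M2.
  + lia.
  + rewrite nat1 in hle; left; apply/andP; split; lra.
  + exact: between_l.
- have hr : (i1.-1 < 3)%N by lia.
  have ei : (i1 = i1.-1.+1)%N by lia.
  have hle : (i2.+1%:R <= i1%:R :> R) by rewrite ler_nat.
  apply: (finish (a := (Ordinal hi1, Ordinal hj1, za)) (b := (Ordinal hi2, Ordinal hj2, zb)) (nb := (Ordinal hr, Ordinal hj1)) (e := (0, P'a.2)) (f := (1, P'a.2))
    IH ca cb); rewrite /adjacent /nR /cd /pos /= ?addr0 //.
  + left; split => //; rewrite {1}ei nat1 addrAC subrr add0r normr1 //.
  + exact: M2.
  + exact: M1.
  + by rewrite {1}ei nat1.
  + lia.
  + rewrite nat1 in hle; right; apply/andP; split; lra.
  + exact: between_l.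
subst i2.
case: (ltngtP j1 j2) => h2.
- have hr : (j1.+1 < 3)%N by lia.
  have hle : (j1.+1%:R <= j2%:R :> R) by rewrite ler_nat.
  apply: (finish (a := (Ordinal hi1, Ordinal hj1, za)) (b := (Ordinal hi2, Ordinal hj2, zb)) (nb := (Ordinal hi1, Ordinal hr)) (e := (P'a.1, 1)) (f := (P'a.1, 0))
    IH ca cb); rewrite /adjacent /nR /cd /pos /= ?nat1 ?addr0 //.
  + by right; split => //; rewrite opprD addrA subrr add0r normrN normr1.
  + exact: M3.
  + exact: M4.
  + lia.
  + exact: between_l.
  + rewrite nat1 in hle; left; apply/andP; split; lra.
- have hr : (j1.-1 < 3)%N by lia.
  have ei : (j1 = j1.-1.+1)%N by lia.
  have hle : (j2.+1%:R <= j1%:R :> R) by rewrite ler_nat.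
  apply: (finish (a := (Ordinal hi1, Ordinal hj1, za)) (b := (Ordinal hi2, Ordinal hj2, zb)) (nb := (Ordinal hi1, Ordinal hr)) (e := (P'a.1, 0)) (f := (P'a.1, 1))
    IH ca cb); rewrite /adjacent /nR /cd /pos /= ?addr0 //.
  + right; split => //; rewrite {1}ei nat1 addrAC subrr add0r normr1 //.
  + exact: M4.
  + exact: M3.
  + by rewrite {1}ei nat1.
  + lia.
  + exact: between_l.
  + rewrite nat1 in hle; right; apply/andP; split; lra.
subst j2.
case/eqP: ne; congr pair; exact: val_inj.
Qed.
End UBS.

Lemma UBS p : UBp p -> UBp p.+1.
Proof.
move=> U x y Px Py /corner_succ gx /corner_succ gy; rewrite DS.
exact: (UB_cell U (leqnn _) gx gy).
Qed.

Lemma UB p : UBp p.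
Proof. elim: p => [|p IH]; [exact: UB0 | exact: UBS]. Qed.

Lemma dist_corner p ns ns' (r s t u : bool) :
  D p (embed p ns (sq_S B ((r:nat)%:R, (s:nat)%:R)))
      (embed p ns' (sq_S B ((t:nat)%:R, (u:nat)%:R)))
  = l1 (plane_pt p ns (r:nat)%:R (s:nat)%:R) (plane_pt p ns' (t:nat)%:R (u:nat)%:R).
Proof.
have c1 : corner p (embed p ns (sq_S B ((r:nat)%:R, (s:nat)%:R))) (plane_pt p ns (r:nat)%:R (s:nat)%:R).
  by exists ns, r, s.
have c2 : corner p (embed p ns' (sq_S B ((t:nat)%:R, (u:nat)%:R))) (plane_pt p ns' (t:nat)%:R (u:nat)%:R).
  by exists ns', t, u.
apply/eqP; rewrite eq_le (UB c1 c2) /=.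
exact: LB (corner_good c1) (corner_good c2).
Qed.
End M.

Unset Implicit Arguments. Set Strict Implicit.
Local Close Scope classical_set_scope.
Theorem mainTheorem13 (R : realType) (B : SquaMS R) (p : nat)
  (ns ns' : nat -> N) (r s t u : bool) :
  let P := @plane_pt R p ns (r:nat)%:R (s:nat)%:R in
  let Q := @plane_pt R p ns' (t:nat)%:R (u:nat)%:R in
  let h := 3 ^+ p * `|P.1 - Q.1| in
  let v := 3 ^+ p * `|P.2 - Q.2| in
  @dist_p R B p (@embed R B p ns (sq_S B ((r:nat)%:R, (s:nat)%:R)))
           (@embed R B p ns' (sq_S B ((t:nat)%:R, (u:nat)%:R)))
  = (h + v) / 3 ^+ p.
Proof.
move=> P Q h v; rewrite dist_corner /l1 /h /v -mulrDr mulrC mulKf //.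
by rewrite expf_neq0 // pnatr_eq0.
Qed.
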